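(* Let $f=\prod_{i=1}^n(y-a_i)\in\overline K[y]$ be reduced ($a_i$ pairwise distinct, $n\ge2$) with $\nu(a_i)>0$ for all $i$. The complete magic matrix $\mathcal A$ induces an automorphism $\mathcal A_{|\overline{\mathcal F}}$ of $\overline{\mathcal F}$. Moreover, the inverse $(\mathcal A_{|\overline{\mathcal F}})^{-1}$ has graded degree $+1$ and its graded map is $(A_{|F})^{-1}$: for every $r\in\mathbf Q$ and $w\in\overline{\mathcal F}_r$, $(\mathcal A_{|\overline{\mathcal F}})^{-1}w\in\overline{\mathcal F}_{r+1}$ and $\mathrm{in}_{r+1}\bigl((\mathcal A_{|\overline{\mathcal F}})^{-1}w\bigr)=(A_{|F})^{-1}\,\mathrm{in}_r(w)$.
   Context: $\overline K=\bigcup_{d\ge1}\mathbf C[[x^{1/d}]][1/x]$ with valuation $\nu$, $'$ denotes $d/dx$. $\overline{\mathcal E}$ is the $\overline K$-space of polynomials in $y$ of degree $<n$, with basis $\varepsilon_i=\prod_{j\ne i}(y-a_j)$; $\overline{\mathcal F}=\{\sum u_i\varepsilon_i:\sum u_i=0\}$ (the polynomials of degree $<n-1$). $\mathrm{val}(\sum w_i\varepsilon_i)=\inf_i\nu(w_i)$; $\overline{\mathcal F}_r=\{w\in\overline{\mathcal F}:\mathrm{val}(w)\ge r\}$; $\mathrm{in}_r(w)\in\mathbf C^n$ is the vector of coefficients of $x^r$ in the $w_i$. $\mathcal A$ is the symmetric matrix over $\overline K$ with off-diagonal entries $-(a'_i-a'_j)/(a_i-a_j)$ and diagonal entries $\sum_{j\ne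 i}(a'_i-a'_j)/(a_i-a_j)$, acting on coordinates in the basis $(\varepsilon_i)$. $A$ is the rational matrix with entries $-m_{i,j}$ off the diagonal and $m_i=\sum_{j\ne i}m_{i,j}$ on the diagonal, where $m_{i,j}=\nu(a_i-a_j)$; $F=\{W\in\mathbf C^n:\sum W_i=0\}$ and $A_{|F}$ is the restriction of $A$ to $F$ (which is invertible). *)

(* Defs.v *)
From mathcomp Require Import all_boot all_order all_algebra.
From mathcomp Require Import complex.
From mathcomp Require Import all_classical all_reals.
Set Implicit Arguments. Unset Strict Implicit. Unset Printing Implicit Defensive.
Import Order.TTheory GRing.Theory Num.Theory.
Local Open Scope classical_set_scope.
Local Open Scope ring_scope.

(* Puiseux series over C = R[i] (R a realType), represented by their
   coefficient functions  q |-> coefficient of x^q,  q : rat.            *)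
Section Puiseux.
Variable R : realType.
Local Notation C := R[i].

Definition ser := rat -> C.

(* f is an element of  \bigcup_d C[[x^{1/d}]][1/x] : exponents in (1/d)Z,
   bounded below. *)
Definition is_puiseux (f : ser) : Prop :=
  exists (d : nat) (m : int), (0 < d)%N /\
    forall q : rat, f q != 0 -> (q * d%:R \is a Num.int) /\ (m%:~R <= q).

Definition psub (f g : ser) : ser := fun q => f q - g q.

(* Cauchy product (the sum has finite support for Puiseux series). *)
Definition pmul (f g : ser) : ser :=
  fun q => \sum_(s \in [set: rat]) f s * g (q - s).

Definition pdiv (f g : ser) : ser :=
  xget (fun _ => 0) [set h | is_puiseux h /\ pmul g h = f].

Definition pder (f : ser) : ser := fun q => ratr (q + 1) * f (q + 1).

Definition nu_ge (f : ser) (r : rat) : Prop := forall q, q < r -> f q = 0.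
Definition nu_gt (f : ser) (r : rat) : Prop := forall q, q <= r -> f q = 0.
Definition nu (f : ser) : rat := xget 0 [set r | f r != 0 /\ nu_ge f r].

Variable n : nat.
Variable a : 'I_n -> ser.

Definition magic_off (i j : 'I_n) : ser :=
  pdiv (psub (pder (a i)) (pder (a j))) (psub (a i) (a j)).
Definition magic (i j : 'I_n) : ser :=
  if i == j then (fun q => \sum_(k | k != i) magic_off i k q)
  else (fun q => - magic_off i j q).

(* action of \mathcal A on coordinates in the basis (eps_i) *)
Definition magic_app (u : 'I_n -> ser) : 'I_n -> ser :=
  fun i q => \sum_j pmul (magic i j) (u j) q.

Definition in_Fbar (u : 'I_n -> ser) : Prop :=
  (forall i, is_puiseux (u i)) /\ (forall q, \sum_i u i q = 0).

Definition val_ge (u : 'I_n -> ser) (r : rat) : Prop := forall i, nu_ge (u i) r.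

Definition init (u : 'I_n -> ser) (r : rat) : 'cV[C]_n := \col_i u i r.

Definition magic_inv (w : 'I_n -> ser) : 'I_n -> ser :=
  xget (fun _ _ => 0) [set u | in_Fbar u /\ magic_app u = w].

Definition mm (i j : 'I_n) : rat := nu (psub (a i) (a j)).
Definition Amat : 'M[rat]_n :=
  \matrix_(i, j) if i == j then \sum_(k | k != i) mm i k else - mm i j.

Definition in_F (W : 'cV[C]_n) : Prop := \sum_i W i 0 = 0.

Definition AFinv (W : 'cV[C]_n) : 'cV[C]_n :=
  xget 0 [set V | in_F V /\ map_mx ratr Amat *m V = W].

End Puiseux.

(* Main.v *)
Require Import Defs.
From mathcomp Require Import all_boot all_order all_algebra.
From mathcomp Require Import complex.
From mathcomp Require Import all_classical all_reals.
From mathcomp Require Import ring lra.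
Set Implicit Arguments. Unset Strict Implicit. Unset Printing Implicit Defensive.
Import Order.TTheory GRing.Theory Num.Theory.
Local Open Scope ring_scope.

Section Lat.
Variable R : realType.
Local Notation C := R[i].

Definition lat (b : rat) (D k : nat) : rat := b + k%:R / D%:R.
Definition lsup (D : nat) (b : rat) (f : ser R) :=
  forall q, f q != 0 -> exists k : nat, q = lat b D k.

Lemma lat_inj b D : (0 < D)%N -> injective (lat b D).
Proof.
move=> D0 k1 k2; rewrite /lat => /addrI /(congr1 (fun x => x * D%:R)).
rewrite !divfK ?pnatr_eq0 -?lt0n // => /eqP; rewrite eqr_nat => /eqP //.
Qed.

Lemma latD b D k j : (0 < D)%N -> lat (lat b D k) D j = lat b D (k + j).
Proof.
move=> D0; rewrite /lat natrD mulrDl addrA //.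
Qed.

Lemma pmul_sum D m1 m2 (f g : ser R) q K : (0 < D)%N -> lsup D m1 f -> lsup D m2 g ->
  (q - m1 - m2) * D%:R < K%:R ->
  pmul f g q = \sum_(k < K) f (lat m1 D k) * g (q - lat m1 D k).
Proof.
move=> D0 sf sg HK; rewrite /pmul.
rewrite (fsbigE (map (lat m1 D) (iota 0 K))) //.
- rewrite big_map (eq_bigl xpredT); last by move=> k; rewrite in_setT.
  rewrite -(@big_mkord _ _ _ K xpredT (fun k => f (lat m1 D k) * g (q - lat m1 D k))).
  by rewrite /index_iota subn0.
- by rewrite map_inj_uniq ?iota_uniq //; apply: lat_inj.
- move=> i _ ni; apply/eqP; rewrite mulf_eq0; apply/negPn/negP.
  rewrite negb_or => /andP[/sf [k Hi] /sg [j Hj]]; subst i.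
  move/negP: ni; apply; apply/mapP; exists k => //.
  rewrite mem_iota /= add0n.
  have : (k%:R : rat) <= (q - m1 - m2) * D%:R.
    have -> : q - m1 - m2 = (k + j)%:R / D%:R.
      have -> : q = lat m2 D j + lat m1 D k by rewrite -Hj; ring.
      by rewrite /lat natrD; field; rewrite pnatr_eq0 -lt0n.
    by rewrite divfK ?pnatr_eq0 -?lt0n // ler_nat leq_addr.
  move=> /le_lt_trans /(_ HK); rewrite ltr_nat => ->//.
Qed.

End Lat.

Section Lat2.
Variable R : realType.
Local Notation C := R[i].
Implicit Types (f g : ser R).

Lemma exK (x : rat) : exists K : nat, x < K%:R.
Proof. by exists (Num.truncn x).+1; apply: truncnS_gt. Qed.

Lemma Dneq0 (D : nat) : (0 < D)%N -> (D%:R : rat) != 0.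
Proof. by move=> D0; rewrite pnatr_eq0 -lt0n. Qed.

Lemma sup_pmul D m1 m2 f g : (0 < D)%N -> lsup D m1 f -> lsup D m2 g ->
  lsup D (m1 + m2) (pmul f g).
Proof.
move=> D0 sf sg q; have [K HK] := exK ((q - m1 - m2) * D%:R).
rewrite (pmul_sum D0 sf sg HK) => /eqP; apply: contra_notP => Hn.
apply: big1 => k _; apply/eqP; rewrite mulf_eq0; apply/negPn/negP.
rewrite negb_or => /andP[_ /sg [j Hj]]; apply: Hn; exists (k + j)%N.
have -> : q = lat m1 D k + lat m2 D j by rewrite -Hj; ring.
by rewrite /lat natrD; field; apply: Dneq0.
Qed.

Lemma pmul_lat D m1 m2 f g N : (0 < D)%N -> lsup D m1 f -> lsup D m2 g ->
  pmul f g (lat (m1 + m2) D N) =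
  \sum_(k < N.+1) f (lat m1 D k) * g (lat m2 D (N - k)).
Proof.
move=> D0 sf sg; rewrite (pmul_sum (K := N.+1) D0 sf sg).
  apply: eq_bigr => k _; congr (_ * g _).
  have kN : (k <= N)%N by rewrite -ltnS.
  by rewrite /lat natrB //; field; apply: Dneq0.
have -> : (lat (m1 + m2) D N - m1 - m2) * D%:R = N%:R.
  by rewrite /lat; field; apply: Dneq0.
by rewrite ltr_nat.
Qed.

Definition liftc (b : rat) (D : nat) (c : nat -> C) : ser R := fun q =>
  if (q - b) * D%:R \is a Num.nat then c (Num.truncn ((q - b) * D%:R)) else 0.

Lemma liftc_sup b D c : (0 < D)%N -> lsup D b (liftc b D c).
Proof.
move=> D0 q; rewrite /liftc; case: ifP => [Hn _|]; last by rewrite eqxx.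
exists (Num.truncn ((q - b) * D%:R)); rewrite /lat truncnK //.
by field; apply: Dneq0.
Qed.

Lemma liftc_lat b D c N : (0 < D)%N -> liftc b D c (lat b D N) = c N.
Proof.
move=> D0; rewrite /liftc.
have -> : (lat b D N - b) * D%:R = N%:R by rewrite /lat; field; apply: Dneq0.
by rewrite natr_nat natrK.
Qed.

Lemma liftc_off b D c q : (0 < D)%N -> (forall N, q != lat b D N) -> liftc b D c q = 0.
Proof.
move=> D0 Hq; rewrite /liftc; case: ifP => // Hn.
have /eqP := Hq (Num.truncn ((q - b) * D%:R)); rewrite /lat truncnK //.
by case; field; apply: Dneq0.
Qed.

Lemma sup_refine D E b f : (0 < D)%N -> (0 < E)%N -> lsup D b f -> lsup (D * E) b f.
Proof.
move=> D0 E0 sf q /sf [k ->]; exists (k * E)%N; rewrite /lat !natrM.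
by field; rewrite Dneq0 // Dneq0.
Qed.

Lemma sup_shift D b f (j : nat) : (0 < D)%N -> lsup D b f -> lsup D (b - j%:R / D%:R) f.
Proof.
move=> D0 sf q /sf [k ->]; exists (k + j)%N; rewrite /lat natrD.
by field; apply: Dneq0.
Qed.

Lemma sup_int_le D (m m' : int) f : (0 < D)%N -> (m' <= m)%R ->
  lsup D m%:~R f -> lsup D m'%:~R f.
Proof.
move=> D0 le sf; have [j Hj] : exists j : nat, m = m' + j%:Z.
  by exists `|m - m'|%N; rewrite gez0_abs ?subr_ge0 //; ring.
have := sup_shift (j * D)%N D0 sf; rewrite natrM mulfK ?Dneq0 //.
by rewrite Hj rmorphD /= -[(j%:Z)%:~R]/(j%:R) addrK.
Qed.

Lemma sup_refine_int D E (m m' : int) f : (0 < D)%N -> (0 < E)%N -> (m' <= m)%R ->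
  lsup D m%:~R f -> lsup (D * E) m'%:~R f.
Proof.
move=> D0 E0 le sf; apply: sup_int_le le _; first by rewrite muln_gt0 D0.
exact: sup_refine.
Qed.

Lemma puis_sup f : is_puiseux f -> exists D (m : int), (0 < D)%N /\ lsup D m%:~R f.
Proof.
move=> [D [m [D0 H]]]; exists D, m; split => // q /H [/intrP [z Hz] le].
have : (m * D%:Z <= z)%R.
  rewrite -(ler_int rat) -Hz rmorphM /= ler_pM2r //.
  by rewrite ltr0n.
rewrite -subr_ge0 => /gez0_abs Habs; exists (`|(z - m * D%:Z)%R|%N).
rewrite /lat pmulrn Habs.
rewrite rmorphB rmorphM /= -Hz.
by field; apply: Dneq0.
Qed.

Lemma sup_puis D (m : int) f : (0 < D)%N -> lsup D m%:~R f -> is_puiseux f.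
Proof.
move=> D0 sf; exists D, m; split => // q /sf [k ->]; split.
  rewrite /lat mulrDl divfK ?Dneq0 //.
  by apply: rpredD; [apply: rpredM; [apply: intr_int | apply: natr_int] | apply: natr_int].
rewrite /lat lerDl divr_ge0 // ler0n //.
Qed.

End Lat2.

Section SRec.
Variable X : Type.
Variable x0 : X.
Variable step : nat -> (nat -> X) -> X.
Fixpoint bld N := match N with 0 => [::] | N'.+1 => rcons (bld N') (step N' (fun k => nth x0 (bld N') k)) end.
Definition srec N := nth x0 (bld N.+1) N.
Lemma size_bld N : size (bld N) = N.
Proof. by elim: N => //= N IH; rewrite size_rcons IH. Qed.
Lemma nth_bld N k : (k < N)%N -> nth x0 (bld N) k = srec k.
Proof.
elim: N => // N IH; rewrite ltnS leq_eqVlt => /orP[/eqP ->|kN]; first by [].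
by rewrite /= nth_rcons size_bld kN IH.
Qed.
Hypothesis Hloc : forall N u v, (forall k, (k < N)%N -> u k = v k) -> step N u = step N v.
Lemma srecE N : srec N = step N srec.
Proof.
rewrite /srec /= nth_rcons size_bld ltnn eqxx; apply: Hloc => k kN.
exact: nth_bld.
Qed.
End SRec.

Section Lat3.
Variable R : realType.
Local Notation C := R[i].
Implicit Types (f g h : ser R).

Lemma lat0 b D : lat b D 0 = b.
Proof. by rewrite /lat mul0r addr0. Qed.

Lemma lsup_sum (I : finType) (P : pred I) D b (F : I -> ser R) :
  (forall i, lsup D b (F i)) -> lsup D b (fun q => \sum_(i | P i) F i q).
Proof.
move=> H q; apply: contra_neqP => Hn; apply: big1 => i _; apply/eqP.
by apply: contra_notT Hn => /H.
Qed.

Lemma lsup_sub D b f g : lsup D b f -> lsup D b g -> lsup D b (psub f g).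
Proof.
move=> sf sg q; rewrite /psub; have [/sf //|/negPn/eqP ->] := boolP (f q != 0).
by rewrite sub0r oppr_eq0 => /sg.
Qed.

Lemma lsup_opp D b f : lsup D b f -> lsup D b (fun q => - f q).
Proof. by move=> sf q; rewrite oppr_eq0 => /sf. Qed.

Lemma lsup_off D b f q : lsup D b f -> (forall N, q <> lat b D N) -> f q = 0.
Proof. by move=> sf Hq; apply/eqP; apply/negP => /negP /sf [k Hk]; apply: (Hq k). Qed.

Lemma sup_common (I : finType) (F : I -> ser R) :
  (forall i, is_puiseux (F i)) ->
  exists D (m : int), (0 < D)%N /\ forall i, lsup D m%:~R (F i).
Proof.
move=> H; have /fin_all_exists [Df HD] : forall i, exists D, exists m : int,
   (0 < D)%N /\ lsup D m%:~R (F i) by move=> i; apply: puis_sup.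
have /fin_all_exists [mf Hm] := HD.
exists (\prod_i Df i)%N, (- \sum_i `|mf i|%:Z)%R; split.
  by rewrite prodn_gt0 // => i; case: (Hm i).
move=> i; rewrite (bigD1 i) //=; case: (Hm i) => D0 sf.
apply: sup_refine_int sf => //.
  by rewrite prodn_gt0 // => j; case: (Hm j).
rewrite (bigD1 i) //= opprD.
have h1 : (- (`|mf i|%:Z) <= mf i)%R by rewrite abszE; apply: lerNnormlW.
apply: le_trans h1; rewrite gerDl oppr_le0 sumr_ge0 //.
Qed.

Lemma sup_comb D1 D2 (m1 m2 : int) : (0 < D1)%N -> (0 < D2)%N ->
  exists D (m : int), [/\ (0 < D)%N, (m <= m1)%R, (m <= m2)%R &
   forall f, (lsup D1 m1%:~R f -> lsup D m%:~R f) /\ (lsup D2 m2%:~R f -> lsup D m%:~R f)].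
Proof.
move=> D10 D20; exists (D1 * D2)%N, (Order.min m1 m2); split.
- by rewrite muln_gt0 D10.
- by rewrite ge_min lexx.
- by rewrite ge_min lexx orbT.
move=> f; split => sf.
  by apply: sup_refine_int sf => //; rewrite ge_min lexx.
by rewrite mulnC; apply: sup_refine_int sf => //; rewrite ge_min lexx orbT.
Qed.

End Lat3.

Section Div.
Variable R : realType.
Local Notation C := R[i].
Implicit Types (f g h : ser R).

Lemma lat_le b D k k' : (0 < D)%N -> (lat b D k <= lat b D k') = (k <= k')%N.
Proof.
move=> D0; rewrite /lat lerD2l ler_pM2r ?ler_nat // invr_gt0 ltr0n //.
Qed.

Lemma lat_lt b D k k' : (0 < D)%N -> (lat b D k < lat b D k') = (k < k')%N.
Proof.
move=> D0; rewrite /lat ltrD2l ltr_pM2r ?ltr_nat // invr_gt0 ltr0n //.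
Qed.

Lemma nu_spec D b g q0 : (0 < D)%N -> lsup D b g -> g q0 != 0 ->
  [/\ g (nu g) != 0, nu_ge g (nu g), lsup D (nu g) g & exists k0, nu g = lat b D k0].
Proof.
move=> D0 sg /[dup] gq0 /sg [k1 Hk1]; subst q0.
have exP : exists k, g (lat b D k) != 0 by exists k1.
case: (ex_minnP exP) => k0 Hk0 Hmin.
set mu := lat b D k0.
have nge : nu_ge g mu.
  move=> q qlt; apply/eqP; apply/negP => /negP /[dup] gq /sg [k Hk]; subst q.
  move: qlt; rewrite lat_lt // => kk0.
  by have := Hmin _ gq; rewrite leqNgt kk0.
have numu : nu g = mu.
  apply: xget_unique; first by split.
  move=> r [gr nr]; case: (ltgtP r mu) => // Hr.
  - by move: gr; rewrite (nge _ Hr) eqxx.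
  - by move: Hk0; rewrite (nr _ Hr) eqxx.
rewrite numu; split => //; last by exists k0.
move=> q /[dup] gq /sg [k Hk]; subst q; exists (k - k0)%N.
rewrite /mu latD // subnKC //; apply: Hmin gq.
Qed.

Lemma div_ex D mu nu0 f g : (0 < D)%N -> lsup D mu g -> g mu != 0 ->
  lsup D (mu + nu0) f -> exists h, lsup D nu0 h /\ pmul g h = f.
Proof.
move=> D0 sg gmu sf.
pose step N (u : nat -> C) :=
  (f (lat (mu + nu0) D N) - \sum_(k < N) g (lat mu D k.+1) * u (N - k.+1)%N) / g mu.
have Hloc : forall N u v, (forall k, (k < N)%N -> u k = v k) -> step N u = step N v.
  move=> N u v Huv; rewrite /step; congr ((_ - _) / _); apply: eq_bigr => k _.
  by rewrite Huv // subnSK // leq_subr.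
pose c := srec 0 step.
exists (liftc nu0 D c); split; first exact: liftc_sup.
have sh : lsup D nu0 (liftc nu0 D c) by apply: liftc_sup.
apply/funext => q.
have [[N ->]|Hoff] := pselect (exists N, q = lat (mu + nu0) D N).
  rewrite (pmul_lat _ D0 sg sh) big_ord_recl /= lat0 subn0 liftc_lat //.
  rewrite /c srecE // /step.
  under eq_bigr => k _ do rewrite liftc_lat // /bump /= add1n.
  by rewrite mulrC divfK // subrK.
rewrite (lsup_off (sup_pmul D0 sg sh)); last by move=> N HN; apply: Hoff; exists N.
by rewrite (lsup_off sf) // => N HN; apply: Hoff; exists N.
Qed.

Lemma div_uniq D mu g h1 h2 : (0 < D)%N -> lsup D mu g -> g mu != 0 ->
  is_puiseux h1 -> is_puiseux h2 -> pmul g h1 = pmul g h2 -> h1 = h2.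
Proof.
move=> D0 sg gmu p1 p2 Heq.
have [D2 [m2 [D20 Hs]]] : exists D2 (m2 : int), (0 < D2)%N /\
   forall b : bool, lsup D2 m2%:~R (if b then h1 else h2).
  by apply: sup_common => -[].
have s1 : lsup (D * D2) m2%:~R h1 by rewrite mulnC; apply: sup_refine (Hs true).
have s2 : lsup (D * D2) m2%:~R h2 by rewrite mulnC; apply: sup_refine (Hs false).
have sg' : lsup (D * D2) mu g by apply: sup_refine.
have D'0 : (0 < D * D2)%N by rewrite muln_gt0 D0.
set e := psub h1 h2.
have se : lsup (D * D2) m2%:~R e by apply: lsup_sub.
have pe : forall q, pmul g e q = 0.
  move=> q; have [K HK] := exK ((q - mu - m2%:~R) * (D * D2)%:R).
  have := congr1 (fun F => F q) Heq; rewrite /=.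
  rewrite (pmul_sum D'0 sg' s1 HK) (pmul_sum D'0 sg' s2 HK) (pmul_sum D'0 sg' se HK).
  move/eqP; rewrite -subr_eq0 -sumrB => /eqP H; apply: etrans H.
  by apply: eq_bigr => k _; rewrite /e /psub mulrBr.
have eN : forall N, e (lat m2%:~R (D * D2) N) = 0.
  elim/ltn_ind => N IH.
  have := pe (lat (mu + m2%:~R) (D * D2) N).
  rewrite (pmul_lat _ D'0 sg' se) big_ord_recl /= lat0 subn0.
  rewrite big1 ?addr0; first by move/eqP; rewrite mulf_eq0 (negbTE gmu) => /eqP.
  move=> k _; rewrite /bump /= add1n IH ?mulr0 //.
  by rewrite subnSK // leq_subr.
apply/funext => q; apply/eqP; rewrite -subr_eq0; apply/eqP.
have [[N ->]|Hoff] := pselect (exists N, q = lat m2%:~R (D * D2) N).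
  exact: eN.
by apply: (lsup_off se) => N HN; apply: Hoff; exists N.
Qed.

Lemma pdiv_eq D mu f g h : (0 < D)%N -> lsup D mu g -> g mu != 0 ->
  is_puiseux h -> pmul g h = f -> Defs.pdiv f g = h.
Proof.
move=> D0 sg gmu ph Hh; apply: xget_unique; first by split.
by move=> y [py Hy]; apply: (div_uniq D0 sg gmu py ph); rewrite Hy Hh.
Qed.

End Div.

Section LinAlg.
Variable R : realType.
Local Notation C := R[i].
Variable n : nat.
Variable a : 'I_n -> ser R.
Hypothesis Hsym : forall i j, mm a i j = mm a j i.
Hypothesis Hpos : forall i j, i != j -> 0 < mm a i j.

Local Notation A := (Amat a).

Lemma Amat_rowsum i : \sum_j A i j = 0.
Proof.
rewrite (bigD1 i) //= !mxE eqxx.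
rewrite [X in _ + X](eq_bigr (fun j => - mm a i j)); last by move=> j ji; rewrite /Amat mxE eq_sym (negbTE ji).
by rewrite sumrN subrr.
Qed.

Lemma Amat_colsum j : \sum_i A i j = 0.
Proof.
rewrite (bigD1 j) //= !mxE eqxx.
rewrite [X in _ + X](eq_bigr (fun i => - mm a j i)); last first.
  by move=> i ij; rewrite /Amat mxE (negbTE ij) Hsym.
by rewrite sumrN subrr.
Qed.

Lemma lap_eq (v : 'I_n -> rat) i :
  \sum_j A i j * v j = \sum_(j | j != i) mm a i j * (v i - v j).
Proof.
have -> : \sum_j A i j * v j = \sum_j A i j * (v j - v i).
  rewrite [RHS](eq_bigr (fun j => A i j * v j - A i j * v i)); last by move=> j _; rewrite mulrBr.
  by rewrite sumrB -mulr_suml Amat_rowsum mul0r subr0.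
rewrite (bigD1 i) //= subrr mulr0 add0r; apply: eq_bigr => j ji.
by rewrite /Amat mxE eq_sym (negbTE ji); ring.
Qed.

Lemma lap_const (v : 'I_n -> rat) :
  (forall i, \sum_j A i j * v j = 0) -> forall i j, v i = v j.
Proof.
move=> H i; pose i0 := [arg max_(k > i) v k]%O.
have Hmax : forall j, v j <= v i0.
  by rewrite /i0; case: arg_maxP => // k _ Hk j; apply: Hk.
have Heq : forall j, v j = v i0.
  move=> j; have := H i0; rewrite lap_eq => /eqP.
  rewrite psumr_eq0; last by move=> k ki; rewrite mulr_ge0 ?subr_ge0 ?Hmax // ltW // Hpos // eq_sym.
  move=> /allP Hall; have [->//|ji] := eqVneq j i0.
  have := Hall j (mem_index_enum j); rewrite ji /= mulf_eq0 subr_eq0.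
  have := @Hpos i0 j; rewrite eq_sym ji => /(_ isT) /gt_eqF -> /=.
  by move=> /eqP ->.
by move=> j; rewrite !Heq.
Qed.

Definition Bmat : 'M[rat]_n := A + const_mx 1.

Lemma Bmat_unit : (0 < n)%N -> Bmat \in unitmx.
Proof.
move=> n0; rewrite -row_free_unit -kermx_eq0; apply/eqP/row_matrixP => k.
set v := row k (kermx Bmat).
have Hv : v *m Bmat = 0 by rewrite -row_mul mulmx_ker row0.
rewrite row0.
have Hj : forall j, \sum_i v 0 i * A i j + \sum_i v 0 i = 0.
  move=> j; have := congr1 (fun M : 'M[rat]_(1, n) => M 0 j) Hv; rewrite !mxE => H.
  apply: etrans H; rewrite -big_split /=; apply: eq_bigr => i _; rewrite /Bmat !mxE; ring.
set s := \sum_i v 0 i.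
have s0 : s = 0.
  have HS : \sum_(j < n) (\sum_i v 0 i * A i j + s) = 0 by apply: big1 => j _; exact: Hj.
  have E1 : \sum_(j < n) \sum_i v 0 i * A i j = 0.
    by rewrite exchange_big big1 // => i _; rewrite -mulr_sumr Amat_rowsum mulr0.
  rewrite big_split /= E1 add0r sumr_const card_ord in HS.
  by move/eqP: HS; rewrite mulrn_eq0 eqn0Ngt n0 /= => /eqP.
have Hc : forall i j, v 0 i = v 0 j.
  apply: lap_const => i; have := Hj i; rewrite -/s s0 addr0 => H; apply: etrans H.
  apply: eq_bigr => j _.
  rewrite mulrC; congr (_ * _); rewrite !mxE; have [->|ij] := eqVneq i j; first by [].
  by rewrite Hsym.
apply/rowP => j; rewrite mxE.
have : s = v 0 j *+ n by rewrite /s (eq_bigr (fun=> v 0 j)) ?sumr_const ?card_ord // => i _; apply: Hc.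
rewrite s0 => /esym /eqP; rewrite mulrn_eq0 eqn0Ngt n0 /= => /eqP; by rewrite /v !mxE.
Qed.

End LinAlg.

Section LinAlgC.
Variable R : realType.
Local Notation C := R[i].
Variable n : nat.
Variable a : 'I_n -> ser R.
Hypothesis Hsym : forall i j, mm a i j = mm a j i.
Hypothesis Hpos : forall i j, i != j -> 0 < mm a i j.
Hypothesis n0 : (0 < n)%N.

Local Notation AC := (map_mx (ratr : rat -> C) (Amat a)).

Lemma AC_colsum j : \sum_i AC i j = 0.
Proof.
rewrite (eq_bigr (fun i => ratr (Amat a i j))); last by move=> i _; rewrite mxE.
by rewrite -rmorph_sum Amat_colsum // rmorph0.
Qed.

Lemma AC_F (W : 'cV[C]_n) : in_F (AC *m W).
Proof.
rewrite /in_F (eq_bigr (fun i => \sum_j AC i j * W j 0)); last by move=> i _; rewrite mxE.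
rewrite exchange_big big1 // => j _; by rewrite -mulr_suml AC_colsum mul0r.
Qed.

Lemma constmul (V : 'cV[C]_n) : (const_mx 1 : 'M[C]_n) *m V = const_mx (\sum_i V i 0).
Proof.
apply/matrixP => i k; rewrite !mxE; rewrite (ord1 k).
by apply: eq_bigr => j _; rewrite mxE mul1r.
Qed.

Lemma BC_eq : map_mx (ratr : rat -> C) (Bmat a) = AC + const_mx 1.
Proof. by apply/matrixP => i j; rewrite /Bmat !mxE rmorphD rmorph1. Qed.

Lemma BC_unit : map_mx (ratr : rat -> C) (Bmat a) \in unitmx.
Proof. by rewrite map_unitmx; apply: Bmat_unit. Qed.

Lemma sumBC (V : 'cV[C]_n) : \sum_i ((AC + const_mx 1) *m V) i 0 = (\sum_i V i 0) *+ n.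
Proof.
rewrite mulmxDl constmul.
rewrite (eq_bigr (fun i => (AC *m V) i 0 + \sum_j V j 0)); last by move=> i _; rewrite !mxE.
by rewrite big_split /= AC_F add0r sumr_const card_ord.
Qed.

Lemma nat_eq0 (x : C) : x *+ n = 0 -> x = 0.
Proof. by move/eqP; rewrite mulrn_eq0 eqn0Ngt n0 /= => /eqP. Qed.

Lemma AC_inj (V : 'cV[C]_n) : in_F V -> AC *m V = 0 -> V = 0.
Proof.
move=> FV AV.
have : map_mx (ratr : rat -> C) (Bmat a) *m V = 0.
  by rewrite BC_eq mulmxDl AV constmul add0r; move: FV; rewrite /in_F => ->; apply/matrixP => i j; rewrite !mxE.
move=> /(congr1 (mulmx (invmx (map_mx (ratr : rat -> C) (Bmat a))))).
by rewrite mulmxA mulVmx ?BC_unit // mul1mx mulmx0.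
Qed.

Lemma AC_surj (W : 'cV[C]_n) : in_F W -> exists V, in_F V /\ AC *m V = W.
Proof.
move=> FW; set B := map_mx (ratr : rat -> C) (Bmat a).
exists (invmx B *m W).
have HB : B *m (invmx B *m W) = W by rewrite mulmxA mulmxV ?BC_unit // mul1mx.
have Fs : in_F (invmx B *m W).
  rewrite /in_F; apply: nat_eq0; rewrite -sumBC -BC_eq -/B HB; exact: FW.
split => //; move: HB; rewrite {1}/B BC_eq mulmxDl constmul.
move: (Fs); rewrite /in_F => ->.
by rewrite (_ : const_mx 0 = 0) ?addr0 //; apply/matrixP => i j; rewrite !mxE.
Qed.

Lemma AFinv_eq (W V : 'cV[C]_n) : in_F V -> AC *m V = W -> AFinv a W = V.
Proof.
move=> FV AV; apply: xget_unique; first by split.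
move=> y [Fy Ay]; apply/eqP; rewrite -subr_eq0; apply/eqP; apply: AC_inj.
  by rewrite /in_F (eq_bigr (fun i => y i 0 - V i 0)) ?sumrB ?Fy ?FV ?subr0 // => i _; rewrite !mxE.
by rewrite mulmxBr Ay AV subrr.
Qed.

Lemma AFinv_spec (W : 'cV[C]_n) : in_F W -> in_F (AFinv a W) /\ AC *m AFinv a W = W.
Proof. by move=> /AC_surj [V [FV AV]]; rewrite (AFinv_eq FV AV). Qed.

Lemma AFinv0 : AFinv a 0 = 0.
Proof.
by apply: AFinv_eq; [rewrite /in_F big1 // => i _; rewrite mxE | rewrite mulmx0].
Qed.

End LinAlgC.

Unset Implicit Arguments.

Section Magic.
Variable R : realType.
Local Notation C := R[i].
Variable n : nat.
Variable a : 'I_n -> ser R.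
Hypothesis Hinj : injective a.
Hypothesis Hgt : forall i, nu_gt (a i) 0.
Variable D : nat.
Variable m : int.
Hypothesis D0 : (0 < D)%N.
Hypothesis Hsa : forall i, lsup D m%:~R (a i).

Lemma g_sup i j : lsup D m%:~R (psub (a i) (a j)).
Proof. exact: lsup_sub. Qed.

Lemma g_nz i j : i != j -> exists q, psub (a i) (a j) q != 0.
Proof.
move=> ij; have [//|H] := pselect (exists q, psub (a i) (a j) q != 0).
exfalso; move/eqP: ij => ij; apply: ij; apply: Hinj; apply/funext => q; apply/eqP.
by rewrite -subr_eq0; apply: contraT => Hq; exfalso; apply: H; exists q.
Qed.

Lemma mm_spec i j : i != j ->
  [/\ psub (a i) (a j) (mm a i j) != 0, lsup D (mm a i j) (psub (a i) (a j)) & 0 < mm a i j].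
Proof.
move=> ij; have [q0 Hq0] := g_nz i j ij.
have [H1 H2 H3 _] := nu_spec D0 (g_sup i j) Hq0.
split => //; rewrite ltNge; apply/negP => le0; move: H1.
by rewrite /psub (Hgt i _ le0) (Hgt j _ le0) subrr eqxx.
Qed.

Lemma mm_sym i j : mm a i j = mm a j i.
Proof.
rewrite /mm /nu; congr (xget 0 _); apply/funext => r; apply/propext.
have E : forall q, psub (a j) (a i) q = - psub (a i) (a j) q by move=> q; rewrite /psub opprB.
split => -[H1 H2]; split.
- by rewrite E oppr_eq0.
- by move=> q /H2 Hq; rewrite E Hq oppr0.
- by move: H1; rewrite E oppr_eq0.
- by move=> q /H2; rewrite E => /eqP; rewrite oppr_eq0 => /eqP.
Qed.

Lemma pder_sub i j : psub (pder (a i)) (pder (a j)) = pder (psub (a i) (a j)).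
Proof. by apply/funext => q; rewrite /psub /pder mulrBr. Qed.

Lemma pder_sup mu (f : ser R) : lsup D mu f -> lsup D (mu + (-1)) (pder f).
Proof.
move=> sf q; rewrite /pder mulf_eq0 negb_or => /andP[_ /sf [k Hk]].
by exists k; apply: (addIr 1); rewrite Hk /lat; ring.
Qed.

Lemma magic_off_spec i j : i != j ->
  [/\ lsup D (-1) (magic_off a i j), is_puiseux (magic_off a i j),
      magic_off a i j (-1) = ratr (mm a i j) &
      pmul (psub (a i) (a j)) (magic_off a i j) = psub (pder (a i)) (pder (a j))].
Proof.
move=> ij; have [H1 H2 H3] := mm_spec i j ij.
set g := psub (a i) (a j) in H1 H2 *; set mu := mm a i j in H1 H2 H3 *.
have sf : lsup D (mu + (-1)) (pder g) by apply: pder_sup.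
have [h [sh Hh]] := div_ex D0 H2 H1 sf.
have ph : is_puiseux h.
  by apply: (@sup_puis _ D (-1)) => //; rewrite (_ : (-1)%:~R = -1) //.
have -> : magic_off a i j = h.
  by rewrite /magic_off pder_sub; apply: (pdiv_eq D0 H2 H1 ph).
split => //; last by rewrite pder_sub.
have := congr1 (fun F => F (lat (mu + (-1)) D 0)) Hh; rewrite /=.
rewrite (pmul_lat _ D0 H2 sh) big_ord_recl big_ord0 addr0 /= !lat0.
rewrite /pder (_ : mu + -1 + 1 = mu); last by ring.
move/(congr1 (fun x => x / g mu)); rewrite [g mu * _]mulrC !mulfK //.
Qed.

Lemma magic_off_sym i j : i != j -> magic_off a i j = magic_off a j i.
Proof.
move=> ij; have [H1 H2 H3] := mm_spec i j ij.
have ji : j != i by rewrite eq_sym.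
have [K1 K2 K3] := mm_spec j i ji.
have [s1 p1 _ Hh] := magic_off_spec i j ij.
rewrite -mm_sym in K1 K2.
symmetry; apply: (pdiv_eq D0 K2 K1 p1).
apply/funext => q; have [K HK] := exK ((q - mm a i j - (-1)) * D%:R).
rewrite (pmul_sum D0 K2 s1 HK).
have := congr1 (fun F => F q) Hh; rewrite /= (pmul_sum D0 H2 s1 HK).
move=> E.
rewrite (_ : psub (pder (a j)) (pder (a i)) q = - psub (pder (a i)) (pder (a j)) q); last by rewrite /psub opprB.
rewrite -E -sumrN; apply: eq_bigr => k _; by rewrite /psub -mulNr opprB.
Qed.

End Magic.

Lemma lsup_sumP (R : realType) (I : finType) (P : pred I) D b (F : I -> ser R) :
  (forall i, P i -> lsup D b (F i)) -> lsup D b (fun q => \sum_(i | P i) F i q).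
Proof.
move=> H q; apply: contra_neqP => Hn; apply: big1 => i Pi; apply/eqP.
by apply: contra_notT Hn => /(H i Pi).
Qed.

Section Magic2.
Variable R : realType.
Local Notation C := R[i].
Variable n : nat.
Variable a : 'I_n -> ser R.
Hypothesis Hinj : injective a.
Hypothesis Hgt : forall i, nu_gt (a i) 0.
Variable D : nat.
Variable m : int.
Hypothesis D0 : (0 < D)%N.
Hypothesis Hsa : forall i, lsup D m%:~R (a i).

Local Notation MOS := (@magic_off_spec R n a Hinj Hgt D m D0 Hsa).
Local Notation MSYM := (@magic_off_sym R n a Hinj Hgt D m D0 Hsa).

Lemma magic_sup i j : lsup D (-1) (magic a i j).
Proof.
rewrite /magic; have [_|ij] := eqVneq i j.
  apply: lsup_sumP => k ki; rewrite eq_sym in ki.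
  by case: (MOS i k ki).
apply: lsup_opp; by case: (MOS i j ij).
Qed.

Lemma magic_m1 i j : magic a i j (-1) = ratr (Amat a i j).
Proof.
rewrite /magic /Amat mxE; have [_|ij] := eqVneq i j.
  rewrite rmorph_sum; apply: eq_bigr => k ki; rewrite eq_sym in ki.
  by case: (MOS i k ki).
by rewrite rmorphN; case: (MOS i j ij) => _ _ ->.
Qed.

Lemma magic_colsum j q : \sum_i magic a i j q = 0.
Proof.
rewrite (bigD1 j) //= /magic eqxx.
rewrite [X in _ + X](eq_bigr (fun i => - magic_off a j i q)); last first.
  by move=> i ij; rewrite (negbTE ij) MSYM.
rewrite sumrN subrr //.
Qed.

Variable D' : nat.
Hypothesis D'0 : (0 < D')%N.
Hypothesis Hm : forall i j, lsup D' (-1) (magic a i j).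

Definition Mk k : 'M[C]_n := \matrix_(i, j) magic a i j (lat (-1) D' k).

Lemma M0 : Mk 0 = map_mx ratr (Amat a).
Proof. by apply/matrixP => i j; rewrite mxE [in RHS]mxE lat0 magic_m1. Qed.

Lemma Mk_F k (V : 'cV[C]_n) : in_F (Mk k *m V).
Proof.
rewrite /in_F (eq_bigr (fun i => \sum_j Mk k i j * V j 0)); last by move=> i _; rewrite mxE.
rewrite exchange_big big1 // => j _; rewrite -mulr_suml.
rewrite (eq_bigr (fun i => magic a i j (lat (-1) D' k))); last by move=> i _; rewrite mxE.
by rewrite magic_colsum mul0r.
Qed.

Definition coefv (u : 'I_n -> ser R) b N : 'cV[C]_n := \col_i u i (lat b D' N).

Lemma app_coef (u : 'I_n -> ser R) b (Hu : forall j, lsup D' b (u j)) N :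
  coefv (magic_app a u) (-1 + b) N = \sum_(k < N.+1) Mk k *m coefv u b (N - k).
Proof.
apply/matrixP => i z; rewrite (ord1 z) !mxE summxE.
rewrite /magic_app (eq_bigr (fun j => \sum_(k < N.+1) magic a i j (lat (-1) D' k) * u j (lat b D' (N - k)))); last first.
  by move=> j _; rewrite (pmul_lat _ D'0 (Hm i j) (Hu j)).
rewrite exchange_big; apply: eq_bigr => k _; rewrite mxE; apply: eq_bigr => j _.
by rewrite !mxE.
Qed.

Lemma app_sup (u : 'I_n -> ser R) b (Hu : forall j, lsup D' b (u j)) i :
  lsup D' (-1 + b) (magic_app a u i).
Proof.
by apply: lsup_sumP => j _; apply: sup_pmul.
Qed.

Lemma app_sub (u1 u2 : 'I_n -> ser R) b (H1 : forall j, lsup D' b (u1 j))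
  (H2 : forall j, lsup D' b (u2 j)) i q :
  magic_app a (fun j => psub (u1 j) (u2 j)) i q = magic_app a u1 i q - magic_app a u2 i q.
Proof.
rewrite /magic_app -sumrB; apply: eq_bigr => j _.
have [K HK] := exK ((q - (-1) - b) * D'%:R).
have H3 : lsup D' b (psub (u1 j) (u2 j)) by apply: lsup_sub.
rewrite (pmul_sum D'0 (Hm i j) H3 HK) (pmul_sum D'0 (Hm i j) (H1 j) HK) (pmul_sum D'0 (Hm i j) (H2 j) HK).
by rewrite -sumrB; apply: eq_bigr => k _; rewrite /psub mulrBr.
Qed.

End Magic2.

Lemma in_F_sum (R : realType) n (I : finType) (V : I -> 'cV[R[i]]_n) :
  (forall k, in_F (V k)) -> in_F (\sum_k V k).
Proof.
move=> H; rewrite /in_F (eq_bigr (fun i => \sum_k V k i 0)); last by move=> i _; rewrite summxE.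
by rewrite exchange_big big1 // => k _; apply: H.
Qed.

Lemma in_F_sub (R : realType) n (V W : 'cV[R[i]]_n) : in_F V -> in_F W -> in_F (V - W).
Proof.
move=> HV HW; rewrite /in_F (eq_bigr (fun i => V i 0 - W i 0)); last by move=> i _; rewrite !mxE.
by rewrite sumrB HV HW subrr.
Qed.

Section Main.
Variable R : realType.
Local Notation C := R[i].
Variable n : nat.
Variable a : 'I_n -> ser R.
Hypothesis Hinj : injective a.
Hypothesis Hgt : forall i, nu_gt (a i) 0.
Variable D : nat.
Variable m : int.
Hypothesis D0 : (0 < D)%N.
Hypothesis Hsa : forall i, lsup D m%:~R (a i).
Hypothesis n0 : (0 < n)%N.

Lemma Hpos i j : i != j -> 0 < mm a i j.
Proof. by move=> ij; case: (mm_spec R n a Hinj Hgt D m D0 Hsa i j ij). Qed.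
Local Notation Hsym := (mm_sym R n a).
Local Notation AC := (map_mx (ratr : rat -> C) (Amat a)).

Lemma refine_magic D2 : (0 < D2)%N -> forall i j, lsup (D * D2) (-1) (magic a i j).
Proof.
move=> D20 i j; apply: sup_refine => //; exact: (magic_sup R n a Hinj Hgt D m D0 Hsa).
Qed.

Lemma vec_lattice (I : finType) (u : I -> ser R) : (forall j, is_puiseux (u j)) ->
  exists D2 (m2 : int), (0 < D2)%N /\ forall j, lsup (D * D2) m2%:~R (u j).
Proof.
move=> H; have [D2 [m2 [D20 Hs]]] := sup_common H.
exists D2, m2; split => // j; rewrite mulnC; exact: sup_refine.
Qed.

Lemma op_Fbar u : in_Fbar u -> in_Fbar (magic_app a u).
Proof.
move=> [Pu Fu]; have [D2 [m2 [D20 Hu]]] := vec_lattice _ u Pu.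
have D'0 : (0 < D * D2)%N by rewrite muln_gt0 D0.
have Hm := refine_magic D2 D20.
have Hs i := app_sup R n a (D * D2) D'0 Hm u m2%:~R Hu i.
split.
  move=> i; apply: (@sup_puis _ (D * D2) (-1 + m2)) => //.
  by rewrite rmorphD /=; exact: Hs.
move=> q; have [[N ->]|Hoff] := pselect (exists N, q = lat (-1 + m2%:~R) (D * D2) N).
  have := app_coef R n a (D * D2) D'0 Hm u m2%:~R Hu N.
  move/(congr1 (fun V : 'cV[C]_n => \sum_i V i 0)).
  rewrite (eq_bigr (fun i => magic_app a u i (lat (-1 + m2%:~R) (D * D2) N))); last by move=> i _; rewrite mxE.
  move=> ->; apply: in_F_sum => k.
  exact: (Mk_F R n a Hinj Hgt D m D0 Hsa).
by rewrite big1 // => i _; apply: (lsup_off (Hs i)) => N HN; apply: Hoff; exists N.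
Qed.

Lemma op_uniq u1 u2 : in_Fbar u1 -> in_Fbar u2 -> magic_app a u1 = magic_app a u2 -> u1 = u2.
Proof.
move=> [P1 F1] [P2 F2] Heq.
have [D2 [m2 [D20 Hs]]] : exists D2 (m2 : int), (0 < D2)%N /\
   forall p : bool * 'I_n, lsup (D * D2) m2%:~R (if p.1 then u1 p.2 else u2 p.2).
  apply: vec_lattice => -[[] j] /=; [exact: P1 | exact: P2].
have D'0 : (0 < D * D2)%N by rewrite muln_gt0 D0.
have Hm := refine_magic D2 D20.
have H1 j : lsup (D * D2) m2%:~R (u1 j) := Hs (true, j).
have H2 j : lsup (D * D2) m2%:~R (u2 j) := Hs (false, j).
set e := fun j => psub (u1 j) (u2 j).
have He j : lsup (D * D2) m2%:~R (e j) by apply: lsup_sub.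
have Ae i q : magic_app a e i q = 0.
  by rewrite (app_sub R n a (D * D2) D'0 Hm u1 u2 m2%:~R H1 H2) Heq subrr.
have EF N : in_F (coefv R n (D * D2) e m2%:~R N).
  rewrite /in_F (eq_bigr (fun i => u1 i (lat m2%:~R (D * D2) N) - u2 i (lat m2%:~R (D * D2) N))).
    by rewrite sumrB F1 F2 subrr.
  by move=> i _; rewrite mxE.
have E0 : forall N, coefv R n (D * D2) e m2%:~R N = 0.
  elim/ltn_ind => N IH.
  have := app_coef R n a (D * D2) D'0 Hm e m2%:~R He N.
  rewrite big_ord_recl /= subn0 (M0 R n a Hinj Hgt D m D0 Hsa) big1; last first.
    move=> k _; rewrite /bump /= add1n IH ?mulmx0 //.
    by rewrite subnSK // leq_subr.
  rewrite addr0 => H.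
  apply: (AC_inj Hsym Hpos n0 (EF N)); rewrite -H.
  by apply/matrixP => i z; rewrite !mxE Ae.
apply/funext => j; apply/funext => q; apply/eqP; rewrite -subr_eq0; apply/eqP.
have [[N ->]|Hoff] := pselect (exists N, q = lat m2%:~R (D * D2) N).
  by have := congr1 (fun V : 'cV[C]_n => V j 0) (E0 N); rewrite !mxE.
by apply: (lsup_off (He j)) => N HN; apply: Hoff; exists N.
Qed.

End Main.

Section Main2.
Variable R : realType.
Local Notation C := R[i].
Variable n : nat.
Variable a : 'I_n -> ser R.
Hypothesis Hinj : injective a.
Hypothesis Hgt : forall i, nu_gt (a i) 0.
Variable D : nat.
Variable m : int.
Hypothesis D0 : (0 < D)%N.
Hypothesis Hsa : forall i, lsup D m%:~R (a i).
Hypothesis n0 : (0 < n)%N.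

Local Notation Hpos := (Hpos R n a Hinj Hgt D m D0 Hsa).
Local Notation Hsym := (mm_sym R n a).
Local Notation AC := (map_mx (ratr : rat -> C) (Amat a)).

Lemma op_exist w : in_Fbar w -> exists u, [/\ in_Fbar u, magic_app a u = w &
  forall r, val_ge w r -> val_ge u (r + 1) /\ init u (r + 1) = AFinv a (init w r)].
Proof.
move=> [Pw Fw]; have [D2 [m2 [D20 Hw]]] := vec_lattice R D D0 _ w Pw.
set D' := (D * D2)%N.
have D'0 : (0 < D')%N by rewrite muln_gt0 D0.
have Hm := refine_magic R n a Hinj Hgt D m D0 Hsa D2 D20.
set b := m2%:~R : rat.
pose WN N := coefv R n D' w b N.
have WF N : in_F (WN N).
  by rewrite /in_F (eq_bigr (fun i => w i (lat b D' N))) ?Fw // => i _; rewrite mxE.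
pose Mk k := Mk R n a D' k.
pose step N (U : nat -> 'cV[C]_n) :=
  AFinv a (WN N - \sum_(k < N) Mk k.+1 *m U (N - k.+1)%N).
have Hloc : forall N u v, (forall k, (k < N)%N -> u k = v k) -> step N u = step N v.
  move=> N u v Huv; rewrite /step; congr (AFinv a (_ - _)); apply: eq_bigr => k _.
  by rewrite Huv // subnSK // leq_subr.
pose U := srec 0 step.
have UE N : U N = step N U by apply: srecE.
have SF N : in_F (WN N - \sum_(k < N) Mk k.+1 *m U (N - k.+1)%N).
  apply: in_F_sub => //; apply: in_F_sum => k.
  exact: (Mk_F R n a Hinj Hgt D m D0 Hsa).
have UF N : in_F (U N) by rewrite UE; case: (AFinv_spec Hsym Hpos n0 (SF N)).
have AU N : AC *m U N = WN N - \sum_(k < N) Mk k.+1 *m U (N - k.+1)%N.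
  by rewrite UE; case: (AFinv_spec Hsym Hpos n0 (SF N)).
set b1 := b + 1.
pose u j := liftc b1 D' (fun N => U N j 0).
have Hu j : lsup D' b1 (u j) by apply: liftc_sup.
have Cu N : coefv R n D' u b1 N = U N.
  by apply/matrixP => i z; rewrite (ord1 z) mxE /u liftc_lat.
have Hb : -1 + b1 = b by rewrite /b1; ring.
have key N : coefv R n D' (magic_app a u) b N = WN N.
  rewrite -{1}Hb (app_coef R n a D' D'0 Hm u b1 Hu N) big_ord_recl /= subn0.
  rewrite Cu (M0 R n a Hinj Hgt D m D0 Hsa) AU.
  under eq_bigr do rewrite /bump /= add1n Cu.
  by rewrite subrK.
have Hsu i := app_sup R n a D' D'0 Hm u b1 Hu i.
rewrite Hb in Hsu.
have Fu : in_Fbar u.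
  split.
    move=> j; apply: (@sup_puis _ D' (m2 + 1)) => //.
    by rewrite rmorphD /=; exact: Hu.
  move=> q; have [[N ->]|Hoff] := pselect (exists N, q = lat b1 D' N).
    by apply: etrans (UF N); apply: eq_bigr => i _; rewrite /u liftc_lat.
  by rewrite big1 // => i _; apply: (lsup_off (Hu i)) => N HN; apply: Hoff; exists N.
have Au : magic_app a u = w.
  apply/funext => i; apply/funext => q.
  have [[N ->]|Hoff] := pselect (exists N, q = lat b D' N).
    by have := congr1 (fun V : 'cV[C]_n => V i 0) (key N); rewrite !mxE.
  rewrite (lsup_off (Hsu i)); last by move=> N HN; apply: Hoff; exists N.
  by rewrite (lsup_off (Hw i)) // => N HN; apply: Hoff; exists N.
exists u; split => // r Hr.
have Z : forall N, lat b1 D' N < r + 1 -> U N = 0.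
  elim/ltn_ind => N IH HN; rewrite UE /step big1; last first.
    move=> k _; rewrite IH ?mulmx0 //; first by rewrite subnSK // leq_subr.
    by apply: le_lt_trans HN; rewrite lat_le // leq_subr.
  rewrite subr0 (_ : WN N = 0) ?(AFinv0 Hsym Hpos n0) //.
  apply/matrixP => i z; rewrite !mxE; apply: (Hr i).
  by move: HN; rewrite /lat /b1; lra.
split.
  move=> j q Hq; have [[N HN]|Hoff] := pselect (exists N, q = lat b1 D' N).
    by rewrite HN /u liftc_lat // Z ?mxE // -HN.
  by apply: (lsup_off (Hu j)) => N HN; apply: Hoff; exists N.
have [[N HN]|Hoff] := pselect (exists N, r + 1 = lat b1 D' N).
  have -> : init u (r + 1) = U N.
    by apply/matrixP => i z; rewrite (ord1 z) !mxE HN /u liftc_lat.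
  rewrite UE /step big1; last first.
    move=> k _; rewrite Z ?mulmx0 // HN lat_lt // ltn_subrL /=.
    exact: (leq_ltn_trans (leq0n k) (ltn_ord k)).
  rewrite subr0; congr (AFinv a _); apply/matrixP => i z; rewrite !mxE.
  by congr (w i _); move: HN; rewrite /lat /b1; lra.
have -> : init u (r + 1) = 0.
  by apply/matrixP => i z; rewrite !mxE; apply: (lsup_off (Hu i)) => N HN; apply: Hoff; exists N.
have -> : init w r = 0.
  apply/matrixP => i z; rewrite !mxE; apply: (lsup_off (Hw i)) => N HN; apply: Hoff.
  by exists N; rewrite HN /lat /b1; ring.
by rewrite (AFinv0 Hsym Hpos n0).
Qed.

End Main2.

Theorem mainTheorem10 (R : realType) (n : nat) (a : 'I_n -> ser R) :
  (2 <= n)%N ->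
  (forall i, is_puiseux (a i)) ->
  injective a ->
  (forall i, nu_gt (a i) 0) ->
  [/\ (* A_{|F} is an automorphism of F (so AFinv is its inverse) *)
      (forall W : 'cV[R[i]]_n, in_F W -> in_F (map_mx ratr (Amat a) *m W)) /\
      (forall W : 'cV[R[i]]_n, in_F W -> exists! V, in_F V /\ map_mx ratr (Amat a) *m V = W),
      (* \mathcal A induces an automorphism of \overline{\mathcal F} *)
      (forall u, in_Fbar u -> in_Fbar (magic_app a u)),
      (forall w, in_Fbar w -> exists! u, in_Fbar u /\ magic_app a u = w) &
      (* graded degree +1, graded map (A_{|F})^{-1} *)
      (forall (r : rat) (w : 'I_n -> ser R), in_Fbar w -> val_ge w r ->
         [/\ in_Fbar (magic_inv a w),
             val_ge (magic_inv a w) (r + 1) &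
             init (magic_inv a w) (r + 1) = AFinv a (init w r)])].
Proof.
move=> n2 Pa Hinj Hgt.
have n0 : (0 < n)%N by apply: leq_trans n2.
have [D [m [D0 Hsa]]] := sup_common Pa.
have Hp := Hpos R n a Hinj Hgt D m D0 Hsa.
have Hs := mm_sym R n a.
have Hex w : in_Fbar w -> exists! u, in_Fbar u /\ magic_app a u = w.
  move=> Fw; have [u [Fu Au _]] := op_exist R n a Hinj Hgt D m D0 Hsa n0 w Fw.
  exists u; split => // u' [Fu' Au'].
  by apply: (op_uniq R n a Hinj Hgt D m D0 Hsa n0 u u' Fu Fu'); rewrite Au Au'.
split.
- split; first by move=> W _; apply: AC_F.
  move=> W FW; have [V [FV AV]] := AC_surj Hs Hp n0 FW.
  exists V; split => // V' [FV' AV'].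
  by rewrite -(AFinv_eq Hs Hp n0 FV AV) (AFinv_eq Hs Hp n0 FV' AV').
- exact: (op_Fbar R n a Hinj Hgt D m D0 Hsa).
- exact: Hex.
move=> r w Fw Hr.
have [u [Fu Au Hg]] := op_exist R n a Hinj Hgt D m D0 Hsa n0 w Fw.
have -> : magic_inv a w = u.
  apply: xget_unique; first by split.
  move=> y [Fy Ay]; apply: (op_uniq R n a Hinj Hgt D m D0 Hsa n0 y u Fy Fu).
  by rewrite Ay Au.
by have [H1 H2] := Hg r Hr; split.
Qed.
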